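(* Consider a Kepler billiard in the plane $\mathbb{R}^2$: a particle moves under a Kepler(-Coulomb) potential centered at a point $F$, and is elastically reflected at a wall $\mathbf{K}$ which is a branch of a non-degenerate conic section having $F$ as a focus. Assume the total energy is non-zero, so that every Keplerian arc is an arc of a conic with one focus at $F$ and a well-defined semi-major axis $a$ (preserved under reflections), and each arc is determined up to orientation by its second focus. Let $F_1,F_2,\dots$ be the sequence of second foci of the successive Keplerian arcs along a billiard trajectory. Then: (i) if $\mathbf{K}$ is an ellipse or a branch of a hyperbola with foci $F$ and $F'$, all the points $F_i$ lie on one circle centered at $F'$; (ii) if $\mathbf{K}$ is a parabola with focus $F$, all the points $F_i$ lie on one line perpendicular to the axis of symmetry of the parabola.
   Context: Elastic reflection means the velocity is reflected with respect to the tangent line of $\mathbf{K}$ at the point of impact, preserving the energy. For an elliptic Keplerian orbit with semi-major axis $a$, the second focus $F_i$ is the point such that the orbit is the ellipse $\{P: |PF|+|PF_i|=2a\}$; for hyperbolic orbits it is the other focus of the hyperbola containing the arc. *)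

(* Defs.v *)
From Stdlib Require Export Reals.
From Coquelicot Require Export Coquelicot.
Open Scope R_scope.

Definition pt := (R * R)%type.
Definition dot (u v : pt) : R := fst u * fst v + snd u * snd v.
Definition vsub (u v : pt) : pt := (fst u - fst v, snd u - snd v).
Definition vnorm (u : pt) : R := sqrt (dot u u).
Definition dist (P Q : pt) : R := vnorm (vsub P Q).

Definition vel (g : R -> pt) (t : R) : pt :=
  (Derive (fun s => fst (g s)) t, Derive (fun s => snd (g s)) t).

(* Kepler(-Coulomb) motion with centre F and coupling k (potential -k/|q-F|,
   k > 0 attractive, k < 0 repulsive), unit mass:
     q'' = - k (q - F) / |q - F|^3.
   [kepler_arc k F g t0 t1]: g solves this equation on an open time interval
   containing [t0, t1], avoiding the centre F. *)
Definition kepler_arc (k : R) (F : pt) (g : R -> pt) (t0 t1 : R) : Prop :=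
  exists a b, a < t0 /\ t1 < b /\
    forall t, a < t < b ->
      g t <> F /\
      ex_derive (fun s => fst (g s)) t /\
      ex_derive (fun s => snd (g s)) t /\
      is_derive (fun s => Derive (fun u => fst (g u)) s) t
        (- k * (fst (g t) - fst F) / (dist (g t) F) ^ 3) /\
      is_derive (fun s => Derive (fun u => snd (g u)) s) t
        (- k * (snd (g t) - snd F) / (dist (g t) F) ^ 3).

Definition energy (k : R) (F : pt) (g : R -> pt) (t : R) : R :=
  dot (vel g t) (vel g t) / 2 - k / dist (g t) F.

Definition semi_major (k E : R) : R := Rabs k / (2 * Rabs E).

(* F2 is the second focus of the Keplerian arc g|[t0,t1] of energy E:
   elliptic case (E < 0): the arc lies on { P : |PF| + |PF2| = 2a };
   hyperbolic case (E > 0): the arc lies on the branch of the hyperbola with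
   foci F, F2 and semi-major axis a on which Kepler arcs move (the branch
   around F if attractive, the other branch if repulsive). *)
Definition second_focus (k : R) (F : pt) (E : R) (g : R -> pt) (t0 t1 : R)
    (F2 : pt) : Prop :=
  forall t, t0 <= t <= t1 ->
    (E < 0 -> dist (g t) F + dist (g t) F2 = 2 * semi_major k E) /\
    (0 < E -> 0 < k -> dist (g t) F2 - dist (g t) F = 2 * semi_major k E) /\
    (0 < E -> k < 0 -> dist (g t) F - dist (g t) F2 = 2 * semi_major k E).

Definition tangent_vec (K : pt -> Prop) (P w : pt) : Prop :=
  w <> (0, 0) /\
  exists (gam : R -> pt) (eps : R), 0 < eps /\
    (forall s, Rabs s < eps -> K (gam s)) /\ gam 0 = P /\
    is_derive (fun s => fst (gam s)) 0 (fst w) /\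
    is_derive (fun s => snd (gam s)) 0 (snd w).

Definition reflect (w v : pt) : pt :=
  (2 * dot v w / dot w w * fst w - fst v, 2 * dot v w / dot w w * snd w - snd v).

(* A Kepler billiard trajectory with arcs 0..N: arc i is g i on [t i, t (S i)];
   between impacts the particle does not meet the wall K; at the impact time
   t (S i) (i < N) the point lies on K and the velocity is elastically
   reflected with respect to the tangent line of K. *)
Definition billiard_traj (k : R) (F : pt) (K : pt -> Prop) (N : nat)
    (t : nat -> R) (g : nat -> R -> pt) : Prop :=
  (forall i, (i <= N)%nat ->
     t i < t (S i) /\ kepler_arc k F (g i) (t i) (t (S i)) /\
     (forall s, t i < s < t (S i) -> ~ K (g i s))) /\
  (forall i, (i < N)%nat ->
     g i (t (S i)) = g (S i) (t (S i)) /\ K (g i (t (S i))) /\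
     exists w, tangent_vec K (g i (t (S i))) w /\
       vel (g (S i)) (t (S i)) = reflect w (vel (g i) (t (S i)))).

Definition ellipse_wall (F F' : pt) (K : pt -> Prop) : Prop :=
  exists b, dist F F' < 2 * b /\ forall P, K P <-> dist P F + dist P F' = 2 * b.

Definition hyperbola_branch_wall (F F' : pt) (K : pt -> Prop) : Prop :=
  exists b, 0 < b /\ 2 * b < dist F F' /\
    ((forall P, K P <-> dist P F - dist P F' = 2 * b) \/
     (forall P, K P <-> dist P F' - dist P F = 2 * b)).

(* Parabola with focus F and directrix { X : (X - D).n = 0 }; its axis of
   symmetry has direction n. *)
Definition parabola_wall (F D n : pt) (K : pt -> Prop) : Prop :=
  n <> (0, 0) /\ dot (vsub F D) n <> 0 /\
  forall P, K P <-> dist P F = Rabs (dot (vsub P D) n) / vnorm n.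

(* Main.v *)
Require Import Defs.
From Stdlib Require Import Lra Psatz Lia.

Lemma dplus f g x df dg : is_derive f x df -> is_derive g x dg ->
  is_derive (fun t => f t + g t) x (df + dg).
Proof. rewrite !is_derive_Reals. intros; apply (derivable_pt_lim_plus f g); auto. Qed.
Lemma dminus f g x df dg : is_derive f x df -> is_derive g x dg ->
  is_derive (fun t => f t - g t) x (df - dg).
Proof. rewrite !is_derive_Reals. intros; apply (derivable_pt_lim_minus f g); auto. Qed.
Lemma dmult f g x df dg : is_derive f x df -> is_derive g x dg ->
  is_derive (fun t => f t * g t) x (df * g x + f x * dg).
Proof. rewrite !is_derive_Reals. intros; apply (derivable_pt_lim_mult f g); auto. Qed.
Lemma dconst c x : is_derive (fun _ => c) x 0.
Proof. rewrite is_derive_Reals. apply derivable_pt_lim_const. Qed.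
Lemma dscal c f x df : is_derive f x df -> is_derive (fun t => c * f t) x (c * df).
Proof. intro H. replace (c*df) with (0 * f x + c * df) by ring.
  apply (dmult (fun _ => c) f); auto using dconst. Qed.
Lemma ddiv f g x df dg : is_derive f x df -> is_derive g x dg -> g x <> 0 ->
  is_derive (fun t => f t / g t) x ((df * g x - f x * dg) / (g x * g x)).
Proof. intros. replace (g x * g x) with (g x ^ 2) by ring. apply is_derive_div; auto. Qed.
Lemma dext (f g : R -> R) x l l' : is_derive f x l -> (forall t, f t = g t) -> l = l' -> is_derive g x l'.
Proof. intros H E ->. apply (is_derive_ext f g); auto. Qed.

Lemma left_zero f T l d : is_derive f T l -> 0 < d ->
  (forall s, T - d < s <= T -> f s = f T) -> l = 0.
Proof.
  rewrite is_derive_Reals. intros H Hd Hc.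
  destruct (Req_dec l 0) as [|Hl]; auto. exfalso.
  destruct (H (Rabs l) (Rabs_pos_lt _ Hl)) as [del Hdel].
  pose (h := - (Rmin d del) / 2).
  assert (Hm1 : 0 < Rmin d del) by (apply Rmin_pos; [lra| apply cond_pos]).
  assert (Hm2 : Rmin d del <= d) by apply Rmin_l.
  assert (Hm3 : Rmin d del <= del) by apply Rmin_r.
  assert (Hh : h <> 0) by (unfold h; lra).
  assert (Hh2 : Rabs h < del) by (unfold h; rewrite Rabs_left; lra).
  specialize (Hdel h Hh Hh2).
  rewrite (Hc (T + h)) in Hdel by (unfold h; lra).
  replace ((f T - f T) / h - l) with (- l) in Hdel by (field; auto).
  rewrite Rabs_Ropp in Hdel. lra.
Qed.

Lemma right_zero f T l d : is_derive f T l -> 0 < d ->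
  (forall s, T <= s < T + d -> f s = f T) -> l = 0.
Proof.
  rewrite is_derive_Reals. intros H Hd Hc.
  destruct (Req_dec l 0) as [|Hl]; auto. exfalso.
  destruct (H (Rabs l) (Rabs_pos_lt _ Hl)) as [del Hdel].
  pose (h := (Rmin d del) / 2).
  assert (Hm1 : 0 < Rmin d del) by (apply Rmin_pos; [lra| apply cond_pos]).
  assert (Hm2 : Rmin d del <= d) by apply Rmin_l.
  assert (Hm3 : Rmin d del <= del) by apply Rmin_r.
  assert (Hh : h <> 0) by (unfold h; lra).
  assert (Hh2 : Rabs h < del) by (unfold h; rewrite Rabs_right; lra).
  specialize (Hdel h Hh Hh2).
  rewrite (Hc (T + h)) in Hdel by (unfold h; lra).
  replace ((f T - f T) / h - l) with (- l) in Hdel by (field; auto).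
  rewrite Rabs_Ropp in Hdel. lra.
Qed.

Lemma const_on f t0 t1 a b : a < t0 -> t1 < b ->
  (forall t, a < t < b -> is_derive f t 0) -> forall t, t0 <= t <= t1 -> f t = f t0.
Proof.
  intros Ha Hb Hd t Ht.
  destruct (Req_dec t t0) as [->|Hne]; auto.
  destruct (MVT_cor2 f (fun _ => 0) t0 t) as [c [Hc _]]. lra.
  intros c Hc. apply is_derive_Reals, Hd. lra.
  lra.
Qed.

Definition Vx (g : R -> pt) t := Derive (fun s => fst (g s)) t.
Definition Vy (g : R -> pt) t := Derive (fun s => snd (g s)) t.

Lemma dist_eq P Q : dist P Q = sqrt ((fst P - fst Q) * (fst P - fst Q) + (snd P - snd Q) * (snd P - snd Q)).
Proof. reflexivity. Qed.

Lemma dist_pos P Q : P <> Q -> 0 < (fst P - fst Q) * (fst P - fst Q) + (snd P - snd Q) * (snd P - snd Q).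
Proof.
  intro H. destruct P as [p1 p2], Q as [q1 q2]; simpl.
  destruct (Req_dec p1 q1); destruct (Req_dec p2 q2); subst; try tauto; nra.
Qed.

Lemma sqrt_sq x : 0 <= x -> sqrt x * sqrt x = x.
Proof. apply sqrt_sqrt. Qed.

Lemma kepler_derivs k F g t0 t1 : kepler_arc k F g t0 t1 ->
  exists a b, a < t0 /\ t1 < b /\ forall t, a < t < b ->
    let X := fst (g t) - fst F in let Y := snd (g t) - snd F in
    let r := dist (g t) F in
    0 < r /\ r * r = X * X + Y * Y /\
    is_derive (fun s => fst (g s) - fst F) t (Vx g t) /\
    is_derive (fun s => snd (g s) - snd F) t (Vy g t) /\
    is_derive (Vx g) t (- k * X / r ^ 3) /\
    is_derive (Vy g) t (- k * Y / r ^ 3) /\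
    is_derive (fun s => dist (g s) F) t ((X * Vx g t + Y * Vy g t) / r).
Proof.
  intros [a [b [Ha [Hb H]]]]. exists a, b. split; [lra|split;[lra|]].
  intros t Ht X Y r. destruct (H t Ht) as [Hne [Ex [Ey [Dx Dy]]]].
  assert (Hp := dist_pos _ _ Hne).
  assert (Hr : 0 < r) by (unfold r; rewrite dist_eq; apply sqrt_lt_R0; auto).
  assert (Hrr : r * r = X * X + Y * Y).
  { unfold r, X, Y. rewrite dist_eq. apply sqrt_sq. lra. }
  assert (HX : is_derive (fun s => fst (g s) - fst F) t (Vx g t)).
  { replace (Vx g t) with (Vx g t - 0) by ring. apply dminus; [apply Derive_correct, Ex | apply dconst]. }
  assert (HY : is_derive (fun s => snd (g s) - snd F) t (Vy g t)).
  { replace (Vy g t) with (Vy g t - 0) by ring. apply dminus; [apply Derive_correct, Ey | apply dconst]. }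
  refine (conj Hr (conj Hrr (conj HX (conj HY (conj Dx (conj Dy _)))))).
  eapply dext. apply is_derive_sqrt.
  apply (dplus (fun s => (fst (g s) - fst F) * (fst (g s) - fst F)) (fun s => (snd (g s) - snd F) * (snd (g s) - snd F))); apply dmult; eauto.
  simpl. exact Hp.
  intros s. rewrite dist_eq. reflexivity.
  cbv beta. match goal with |- ?a = ?b => change (@eq R a b) end.
  fold X Y. replace (sqrt (X * X + Y * Y)) with r by (unfold r; rewrite dist_eq; reflexivity).
  field. lra.
Qed.

Lemma energy_eq k F g t : energy k F g t = (Vx g t * Vx g t + Vy g t * Vy g t) / 2 - k / dist (g t) F.
Proof. reflexivity. Qed.

Lemma energy_const k F g t0 t1 : kepler_arc k F g t0 t1 ->
  forall t, t0 <= t <= t1 -> energy k F g t = energy k F g t0.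
Proof.
  intros Hk. destruct (kepler_derivs _ _ _ _ _ Hk) as [a [b [Ha [Hb H]]]].
  apply (const_on _ t0 t1 a b Ha Hb).
  intros t Ht. destruct (H t Ht) as [Hr [Hrr [HX [HY [HVx [HVy HR]]]]]].
  eapply dext.
  apply dminus. apply (dscal (/2) (fun s => Vx g s * Vx g s + Vy g s * Vy g s)).
  apply dplus; apply dmult; eauto.
  apply (ddiv (fun _ => k) (fun s => dist (g s) F)). apply dconst. eauto. lra.
  intros s. rewrite energy_eq. unfold Rdiv. ring.
  set (X := fst (g t) - fst F) in *. set (Y := snd (g t) - snd F) in *.
  set (r := dist (g t) F) in *.
  field_simplify. 2: lra.
  match goal with |- ?a = ?b => change (@eq R a b) end. unfold Rdiv; ring.
Qed.

Definition foc k m (F P v : pt) : pt :=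
  let x1 := fst P - fst F in let x2 := snd P - snd F in let r := dist P F in
  let s := fst v * fst v + snd v * snd v in let p := x1 * fst v + x2 * snd v in
  (fst F + (- m * x1 / r + m / k * (s * x1 - p * fst v)),
   snd F + (- m * x2 / r + m / k * (s * x2 - p * snd v))).

Lemma lemA k m r x1 x2 v1 v2 q1 q2 : k <> 0 -> 0 < r -> r * r = x1 * x1 + x2 * x2 ->
  (x1 - q1) ^ 2 + (x2 - q2) ^ 2 = (r + m) ^ 2 ->
  m * (x1 * v1 + x2 * v2) / r + v1 * q1 + v2 * q2 = 0 ->
  x1 * q1 + x2 * q2 = m / k * ((v1 * v1 + v2 * v2) * (r * r) - (x1 * v1 + x2 * v2) * (x1 * v1 + x2 * v2)) - m * r ->
  q1 = - m * x1 / r + m / k * ((v1 * v1 + v2 * v2) * x1 - (x1 * v1 + x2 * v2) * v1) /\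
  q2 = - m * x2 / r + m / k * ((v1 * v1 + v2 * v2) * x2 - (x1 * v1 + x2 * v2) * v2).
Proof.
  intros Hk Hr Hrr H0 H1 H2.
  set (s := v1 * v1 + v2 * v2) in *. set (p := x1 * v1 + x2 * v2) in *.
  set (a1 := - m * x1 / r + m / k * (s * x1 - p * v1)).
  set (a2 := - m * x2 / r + m / k * (s * x2 - p * v2)).
  assert (E1 : x1 * (q1 - a1) + x2 * (q2 - a2) = 0).
  { unfold a1, a2. rewrite <- (Rplus_0_r (x1 * (q1 - _) + _)).
    replace (x1 * (q1 - (- m * x1 / r + m / k * (s * x1 - p * v1))) +
      x2 * (q2 - (- m * x2 / r + m / k * (s * x2 - p * v2))) + 0)
    with ((x1 * q1 + x2 * q2) + m * (x1 * x1 + x2 * x2) / r - m / k * (s * (x1 * x1 + x2 * x2) - p * p))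
      by (unfold p; field; lra).
    rewrite H2, <- Hrr. field. lra. }
  assert (E2 : v1 * (q1 - a1) + v2 * (q2 - a2) = 0).
  { unfold a1, a2. 
    replace (v1 * (q1 - (- m * x1 / r + m / k * (s * x1 - p * v1))) +
      v2 * (q2 - (- m * x2 / r + m / k * (s * x2 - p * v2))))
    with (m * (x1 * v1 + x2 * v2) / r + v1 * q1 + v2 * q2) by (unfold p, s; field; lra).
    exact H1. }
  set (c := x1 * v2 - x2 * v1).
  destruct (Req_dec c 0) as [Hc|Hc].
  - assert (S1 : s * x1 - p * v1 = v2 * c) by (unfold s, p, c; ring).
    assert (S2 : s * x2 - p * v2 = - v1 * c) by (unfold s, p, c; ring).
    assert (A1 : a1 = - m * x1 / r) by (unfold a1; rewrite S1, Hc; ring).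
    assert (A2 : a2 = - m * x2 / r) by (unfold a2; rewrite S2, Hc; ring).
    rewrite A1, A2 in E1 |- *.
    assert (XQ : x1 * q1 + x2 * q2 = - m * r).
    { replace (x1 * q1 + x2 * q2) with (x1 * (q1 - - m * x1 / r) + x2 * (q2 - - m * x2 / r) - m * (x1 * x1 + x2 * x2) / r) by (field; lra).
      rewrite E1, <- Hrr. field. lra. }
    assert (QQ : q1 * q1 + q2 * q2 = m * m) by nra.
    assert (DD : (q1 - - m * x1 / r) ^ 2 + (q2 - - m * x2 / r) ^ 2 = 0).
    { replace ((q1 - - m * x1 / r) ^ 2 + (q2 - - m * x2 / r) ^ 2) with
        ((q1 * q1 + q2 * q2) + 2 * m * (x1 * q1 + x2 * q2) / r + m * m * (x1 * x1 + x2 * x2) / (r * r)) by (field; lra).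
      rewrite QQ, XQ, <- Hrr. field. lra. }
    set (u1 := q1 - - m * x1 / r) in DD. set (u2 := q2 - - m * x2 / r) in DD.
    assert (U1 : u1 = 0) by nra. assert (U2 : u2 = 0) by nra.
    unfold u1, u2 in *. split; lra.
  - assert (D1 : (q1 - a1) * c = 0).
    { replace ((q1-a1)*c) with (v2 * (x1*(q1-a1)+x2*(q2-a2)) - x2*(v1*(q1-a1)+v2*(q2-a2))) by (unfold c; ring).
      rewrite E1, E2; ring. }
    assert (D2 : (q2 - a2) * c = 0).
    { replace ((q2-a2)*c) with (x1 * (v1*(q1-a1)+v2*(q2-a2)) - v1*(x1*(q1-a1)+x2*(q2-a2))) by (unfold c; ring).
      rewrite E1, E2; ring. }
    split.
    + apply Rmult_integral in D1. destruct D1; [lra|tauto].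
    + apply Rmult_integral in D2. destruct D2; [lra|tauto].
Qed.

Lemma lemB k m r X Y s N q1 q2 : k <> 0 -> 0 < r -> r * r = X * X + Y * Y ->
  m * ((s + (X * (- k * X / r ^ 3) + Y * (- k * Y / r ^ 3))) * r - N * (N / r)) / (r * r)
    + (- k * X / r ^ 3) * q1 + (- k * Y / r ^ 3) * q2 = 0 ->
  X * q1 + Y * q2 = m / k * (s * (r * r) - N * N) - m * r.
Proof.
  intros Hk Hr Hrr H.
  assert (E : X * (- k * X / r ^ 3) + Y * (- k * Y / r ^ 3) = - k / r).
  { replace (X * (- k * X / r ^ 3) + Y * (- k * Y / r ^ 3)) with (- k * (X * X + Y * Y) / r ^ 3) by (field; lra).
    rewrite <- Hrr. field. lra. }
  rewrite E in H.
  apply (Rmult_eq_reg_l (k / r ^ 3)). 2: { apply Rmult_integral_contrapositive; split; [lra|]. apply Rinv_neq_0_compat. apply pow_nonzero. lra. }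
  transitivity (m * ((s + - k / r) * r - N * (N / r)) / (r * r)).
  2: { field. lra. }
  assert (k / r^3 * (X*q1+Y*q2) = -((-k*X/r^3)*q1 + (-k*Y/r^3)*q2)) by (field; lra).
  lra.
Qed.

Lemma focus_lemma k m F g t0 t1 T Q : k <> 0 -> kepler_arc k F g t0 t1 -> t0 < t1 ->
  (T = t0 \/ T = t1) ->
  (forall t, t0 <= t <= t1 ->
     (fst (g t) - fst Q) ^ 2 + (snd (g t) - snd Q) ^ 2 = (dist (g t) F + m) ^ 2) ->
  Q = foc k m F (g T) (vel g T).
Proof.
  intros Hk Hka H01 HT HQ.
  destruct (kepler_derivs _ _ _ _ _ Hka) as [a [b [Ha [Hb H]]]].
  set (q1 := fst Q - fst F). set (q2 := snd Q - snd F).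
  pose (L := fun s => m * dist (g s) F + (fst (g s) - fst F) * q1 + (snd (g s) - snd F) * q2).
  pose (D := fun s => m * ((fst (g s) - fst F) * Vx g s + (snd (g s) - snd F) * Vy g s) / dist (g s) F
     + Vx g s * q1 + Vy g s * q2).
  pose (D' := fun s => let X := fst (g s) - fst F in let Y := snd (g s) - snd F in let r := dist (g s) F in
     let N := X * Vx g s + Y * Vy g s in
     m * ((Vx g s * Vx g s + Vy g s * Vy g s + (X * (- k * X / r ^ 3) + Y * (- k * Y / r ^ 3))) * r - N * (N / r)) / (r * r)
    + (- k * X / r ^ 3) * q1 + (- k * Y / r ^ 3) * q2).
  assert (HL : forall s, t0 <= s <= t1 -> L s = (q1 * q1 + q2 * q2 - m * m) / 2).
  { intros s Hs. assert (Hs' : a < s < b) by lra. destruct (H s Hs') as [Hr [Hrr _]].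
    specialize (HQ s Hs). unfold L. 
    set (X := fst (g s) - fst F) in *. set (Y := snd (g s) - snd F) in *. set (r := dist (g s) F) in *.
    replace (fst (g s) - fst Q) with (X - q1) in HQ by (unfold X, q1; ring).
    replace (snd (g s) - snd Q) with (Y - q2) in HQ by (unfold Y, q2; ring).
    nra. }
  assert (HLD : forall s, a < s < b -> is_derive L s (D s)).
  { intros s Hs. destruct (H s Hs) as [Hr [Hrr [HX [HY [HVx [HVy HR]]]]]].
    eapply dext. apply dplus. apply dplus. apply dscal. exact HR.
    apply (dmult (fun s => fst (g s) - fst F) (fun _ => q1)). exact HX. apply dconst.
    apply (dmult (fun s => snd (g s) - snd F) (fun _ => q2)). exact HY. apply dconst.
    intros; reflexivity. unfold D. match goal with |- ?a = ?b => change (@eq R a b) end. field. lra. }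
  assert (HDD : forall s, a < s < b -> is_derive D s (D' s)).
  { intros s Hs. destruct (H s Hs) as [Hr [Hrr [HX [HY [HVx [HVy HR]]]]]].
    eapply dext. apply dplus. apply dplus.
    apply (ddiv (fun s => m * ((fst (g s) - fst F) * Vx g s + (snd (g s) - snd F) * Vy g s)) (fun s => dist (g s) F)).
    apply dscal. apply dplus; apply dmult; eauto. exact HR. lra.
    apply (dmult (Vx g) (fun _ => q1)). exact HVx. apply dconst.
    apply (dmult (Vy g) (fun _ => q2)). exact HVy. apply dconst.
    intros; reflexivity. unfold D'. match goal with |- ?a = ?b => change (@eq R a b) end. field. lra. }
  assert (HT' : a < T < b) by (destruct HT; lra).
  assert (Z : D T = 0 /\ D' T = 0).
  { destruct HT as [-> | ->].
    - assert (Dz : forall s, t0 <= s < t1 -> D s = 0).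
      { intros s Hs. apply (right_zero L s (D s) (t1 - s)). apply HLD; lra. lra.
        intros s' Hs'. rewrite !HL; lra. }
      split. apply Dz; lra.
      apply (right_zero D t0 (D' t0) (t1 - t0)). apply HDD; lra. lra.
      intros s' Hs'. rewrite !Dz; lra.
    - assert (Dz : forall s, t0 < s <= t1 -> D s = 0).
      { intros s Hs. apply (left_zero L s (D s) (s - t0)). apply HLD; lra. lra.
        intros s' Hs'. rewrite !HL; lra. }
      split. apply Dz; lra.
      apply (left_zero D t1 (D' t1) (t1 - t0)). apply HDD; lra. lra.
      intros s' Hs'. rewrite !Dz; lra. }
  destruct Z as [Z1 Z2].
  destruct (H T HT') as [Hr [Hrr _]].
  unfold D, D' in *.
  set (X := fst (g T) - fst F) in *. set (Y := snd (g T) - snd F) in *. set (r := dist (g T) F) in *.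
  apply lemB in Z2; auto.
  assert (HQT : (X - q1) ^ 2 + (Y - q2) ^ 2 = (r + m) ^ 2).
  { replace (X - q1) with (fst (g T) - fst Q) by (unfold X, q1; ring).
    replace (Y - q2) with (snd (g T) - snd Q) by (unfold Y, q2; ring).
    apply HQ. destruct HT; lra. }
  destruct (lemA k m r X Y (Vx g T) (Vy g T) q1 q2 Hk Hr Hrr HQT Z1 Z2) as [E1 E2].
  unfold foc. simpl. fold X Y r. destruct Q as [Q1 Q2]. unfold q1, q2 in *. simpl in *.
  unfold Vx, Vy in E1, E2.
  f_equal. rewrite <- E1. ring. rewrite <- E2. ring.
Qed.

Lemma dist_sq P Q : dist P Q * dist P Q = (fst P - fst Q) * (fst P - fst Q) + (snd P - snd Q) * (snd P - snd Q).
Proof. rewrite dist_eq. apply sqrt_sqrt. apply Rplus_le_le_0_compat; apply Rle_0_sqr. Qed.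

Lemma dist_nonneg P Q : 0 <= dist P Q.
Proof. rewrite dist_eq. apply sqrt_pos. Qed.

Lemma dist_pos' P Q : P <> Q -> 0 < dist P Q.
Proof. intro H. rewrite dist_eq. apply sqrt_lt_R0. apply dist_pos; auto. Qed.

Lemma dist_derive (gam : R -> pt) s0 d1 d2 Q :
  is_derive (fun s => fst (gam s)) s0 d1 -> is_derive (fun s => snd (gam s)) s0 d2 ->
  gam s0 <> Q ->
  is_derive (fun s => dist (gam s) Q) s0
    (((fst (gam s0) - fst Q) * d1 + (snd (gam s0) - snd Q) * d2) / dist (gam s0) Q).
Proof.
  intros H1 H2 Hne.
  assert (HX : is_derive (fun s => fst (gam s) - fst Q) s0 d1).
  { replace d1 with (d1 - 0) by ring. apply dminus; [auto | apply dconst]. }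
  assert (HY : is_derive (fun s => snd (gam s) - snd Q) s0 d2).
  { replace d2 with (d2 - 0) by ring. apply dminus; [auto | apply dconst]. }
  assert (Hp := dist_pos _ _ Hne).
  eapply dext. apply is_derive_sqrt.
  apply (dplus (fun s => (fst (gam s) - fst Q) * (fst (gam s) - fst Q)) (fun s => (snd (gam s) - snd Q) * (snd (gam s) - snd Q))); apply dmult; eauto.
  simpl. exact Hp.
  intros s. rewrite dist_eq. reflexivity.
  cbv beta. match goal with |- ?a = ?b => change (@eq R a b) end.
  rewrite (dist_eq (gam s0) Q). field. apply Rgt_not_eq, sqrt_lt_R0; auto.
Qed.

Lemma tangency2 K F F' P w sg c : tangent_vec K P w ->
  (forall X, K X -> dist X F + sg * dist X F' = c) -> P <> F -> P <> F' ->
  (fst w * (fst P - fst F) + snd w * (snd P - snd F)) / dist P F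
  + sg * ((fst w * (fst P - fst F') + snd w * (snd P - snd F')) / dist P F') = 0.
Proof.
  intros [Hw [gam [eps [He [HK [H0 [D1 D2]]]]]]] HKc HF HF'.
  assert (Hd : is_derive (fun s => dist (gam s) F + sg * dist (gam s) F') 0
     (((fst (gam 0) - fst F) * fst w + (snd (gam 0) - snd F) * snd w) / dist (gam 0) F +
       sg * (((fst (gam 0) - fst F') * fst w + (snd (gam 0) - snd F') * snd w) / dist (gam 0) F'))).
  { apply dplus. apply dist_derive; auto; congruence. apply dscal. apply dist_derive; auto; congruence. }
  apply (right_zero _ 0 _ eps) in Hd.
  - rewrite H0 in Hd. rewrite <- Hd. field.
    split; apply Rgt_not_eq, dist_pos'; auto.
  - exact He.
  - intros s Hs. rewrite !HKc; try reflexivity; apply HK; first [rewrite Rabs_R0; lra | rewrite Rabs_right; lra].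
Qed.

Lemma nn_pos (n : pt) : n <> (0,0) -> 0 < fst n * fst n + snd n * snd n.
Proof. intro H. assert (H' := dist_pos n (0,0) H). simpl in H'. nra. Qed.

Lemma parab_sq F D n X : n <> (0,0) -> dist X F = Rabs (dot (vsub X D) n) / vnorm n ->
  ((fst X - fst F) * (fst X - fst F) + (snd X - snd F) * (snd X - snd F)) * (fst n * fst n + snd n * snd n)
  = ((fst X - fst D) * fst n + (snd X - snd D) * snd n) ^ 2.
Proof.
  intros Hn H. rewrite <- dist_sq. rewrite H.
  assert (Hp := nn_pos n Hn).
  unfold vnorm, dot, vsub; simpl.
  set (B := (fst X - fst D) * fst n + (snd X - snd D) * snd n).
  set (c := fst n * fst n + snd n * snd n) in *.
  assert (Hs : sqrt c * sqrt c = c) by (apply sqrt_sqrt; lra).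
  assert (Hs' : 0 < sqrt c) by (apply sqrt_lt_R0; lra).
  assert (HB : Rabs B * Rabs B = B * B) by (rewrite <- Rabs_mult; apply Rabs_right; nra).
  field_simplify_eq. 2: lra. replace (Rabs B ^ 2) with (Rabs B * Rabs B) by ring. replace (sqrt c ^ 2) with (sqrt c * sqrt c) by ring. rewrite HB, Hs. ring.
Qed.

Lemma tangencyP K F D n P w : tangent_vec K P w ->
  (forall X, K X <-> dist X F = Rabs (dot (vsub X D) n) / vnorm n) -> n <> (0,0) ->
  (fst w * (fst P - fst F) + snd w * (snd P - snd F)) * (fst n * fst n + snd n * snd n)
  = ((fst P - fst D) * fst n + (snd P - snd D) * snd n) * (fst w * fst n + snd w * snd n).
Proof.
  intros [Hw [gam [eps [He [HK [H0 [D1 D2]]]]]]] HKc Hn.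
  set (c := fst n * fst n + snd n * snd n).
  pose (h := fun s => ((fst (gam s) - fst F) * (fst (gam s) - fst F) + (snd (gam s) - snd F) * (snd (gam s) - snd F)) * c
    - ((fst (gam s) - fst D) * fst n + (snd (gam s) - snd D) * snd n) * ((fst (gam s) - fst D) * fst n + (snd (gam s) - snd D) * snd n)).
  assert (dm : forall Q1, is_derive (fun s => fst (gam s) - Q1) 0 (fst w)).
  { intro Q1. replace (fst w) with (fst w - 0) by ring. apply dminus; [auto | apply dconst]. }
  assert (dm2 : forall Q1, is_derive (fun s => snd (gam s) - Q1) 0 (snd w)).
  { intro Q1. replace (snd w) with (snd w - 0) by ring. apply dminus; [auto | apply dconst]. }
  assert (Hd : is_derive h 0
     ((2 * ((fst (gam 0) - fst F) * fst w + (snd (gam 0) - snd F) * snd w)) * c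
      - 2 * ((fst (gam 0) - fst D) * fst n + (snd (gam 0) - snd D) * snd n) * (fst w * fst n + snd w * snd n))).
  { pose (Bf := fun s => (fst (gam s) - fst D) * fst n + (snd (gam s) - snd D) * snd n).
    assert (dB : is_derive Bf 0 (fst w * fst n + (fst (gam 0) - fst D) * 0 + (snd w * snd n + (snd (gam 0) - snd D) * 0))).
    { apply dplus. apply (dmult (fun s => fst (gam s) - fst D) (fun _ => fst n)); [apply dm | apply dconst].
      apply (dmult (fun s => snd (gam s) - snd D) (fun _ => snd n)); [apply dm2 | apply dconst]. }
    eapply dext. apply dminus.
    apply (dmult (fun s => (fst (gam s) - fst F) * (fst (gam s) - fst F) + (snd (gam s) - snd F) * (snd (gam s) - snd F)) (fun _ => c)).
    apply dplus; apply dmult; auto. apply dconst.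
    apply (dmult Bf Bf); exact dB.
    intros; reflexivity.
    cbv beta. match goal with |- ?a = ?b => change (@eq R a b) end. unfold Bf. ring. }
  apply (right_zero _ 0 _ eps) in Hd.
  - rewrite H0 in Hd. lra.
  - exact He.
  - intros s Hs.
    assert (E : forall s, Rabs s < eps -> h s = 0).
    { intros s' Hs'. unfold h. assert (Hq := parab_sq F D n (gam s') Hn (proj1 (HKc _) (HK s' Hs'))).
      fold c in Hq. rewrite Hq. ring. }
    rewrite (E s), (E 0); auto. rewrite Rabs_R0; lra. rewrite Rabs_right; lra.
Qed.

Lemma refl_key a1 a2 b1 b2 w1 w2 v1 v2 :
  w1 * w1 + w2 * w2 <> 0 -> a1 * a1 + a2 * a2 = b1 * b1 + b2 * b2 ->
  w1 * (a1 - b1) + w2 * (a2 - b2) = 0 -> ~ (a1 = b1 /\ a2 = b2) ->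
  let c := 2 * (v1 * w1 + v2 * w2) / (w1 * w1 + w2 * w2) in
  (a1 * v1 + a2 * v2) * (b1 * v1 + b2 * v2) =
  (a1 * (c * w1 - v1) + a2 * (c * w2 - v2)) * (b1 * (c * w1 - v1) + b2 * (c * w2 - v2)).
Proof.
  intros HW Hn Hd Hne c.
  set (W := w1 * w1 + w2 * w2) in *.
  assert (Hcross : w1 * (a2 + b2) - w2 * (a1 + b1) = 0).
  { destruct (Req_dec a1 b1) as [E1|E1].
    - assert (E2 : a2 <> b2) by tauto.
      assert (E : (a2 - b2) * (w1 * (a2 + b2) - w2 * (a1 + b1)) = 0).
      { replace ((a2 - b2) * (w1 * (a2 + b2) - w2 * (a1 + b1))) with
          (w1 * (a2 * a2 - b2 * b2) - (a1 + b1) * (w2 * (a2 - b2))) by ring.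
        replace (w2 * (a2 - b2)) with (- (w1 * (a1 - b1))) by lra.
        replace (a2 * a2 - b2 * b2) with (- (a1 * a1 - b1 * b1)) by lra. ring. }
      apply Rmult_integral in E. destruct E; [lra|auto].
    - assert (E : (a1 - b1) * (w1 * (a2 + b2) - w2 * (a1 + b1)) = 0).
      { replace ((a1 - b1) * (w1 * (a2 + b2) - w2 * (a1 + b1))) with
          ((a2 + b2) * (w1 * (a1 - b1)) - w2 * (a1 * a1 - b1 * b1)) by ring.
        replace (w1 * (a1 - b1)) with (- (w2 * (a2 - b2))) by lra.
        replace (a1 * a1 - b1 * b1) with (- (a2 * a2 - b2 * b2)) by lra. ring. }
      apply Rmult_integral in E. destruct E; [lra|auto]. }
  assert (K1 : W * (a1 + b1) - 2 * (a1 * w1 + a2 * w2) * w1 = - w2 * (w1 * (a2 + b2) - w2 * (a1 + b1)) - w1 * (w1 * (a1 - b1) + w2 * (a2 - b2))) by (unfold W; ring).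
  assert (K2 : W * (a2 + b2) - 2 * (a1 * w1 + a2 * w2) * w2 = w1 * (w1 * (a2 + b2) - w2 * (a1 + b1)) - w2 * (w1 * (a1 - b1) + w2 * (a2 - b2))) by (unfold W; ring).
  rewrite Hcross, Hd in K1, K2.
  assert (HB1 : b1 = 2 * (a1 * w1 + a2 * w2) * w1 / W - a1).
  { apply (Rmult_eq_reg_l W); auto. field_simplify_eq; auto. lra. }
  assert (HB2 : b2 = 2 * (a1 * w1 + a2 * w2) * w2 / W - a2).
  { apply (Rmult_eq_reg_l W); auto. field_simplify_eq; auto. lra. }
  rewrite HB1, HB2. unfold c, W in *. field. auto.
Qed.

Lemma foc_diff k m F P v v' :
  fst v * fst v + snd v * snd v = fst v' * fst v' + snd v' * snd v' ->
  let x1 := fst P - fst F in let x2 := snd P - snd F in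
  let p := x1 * fst v + x2 * snd v in let p' := x1 * fst v' + x2 * snd v' in
  fst (foc k m F P v) - fst (foc k m F P v') = m / k * (p' * fst v' - p * fst v) /\
  snd (foc k m F P v) - snd (foc k m F P v') = m / k * (p' * snd v' - p * snd v).
Proof.
  intros Hs x1 x2 p p'. unfold foc; simpl. fold x1 x2. rewrite <- Hs. fold p p'. split; ring.
Qed.

Lemma final_dist k m F F' P v v' :
  fst v * fst v + snd v * snd v = fst v' * fst v' + snd v' * snd v' ->
  let Q := foc k m F P v in let Q' := foc k m F P v' in
  (fst P - fst Q) ^ 2 + (snd P - snd Q) ^ 2 = (fst P - fst Q') ^ 2 + (snd P - snd Q') ^ 2 ->
  let x1 := fst P - fst F in let x2 := snd P - snd F in
  let y1 := fst F' - fst P in let y2 := snd F' - snd P in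
  (x1 * fst v + x2 * snd v) * (y1 * fst v + y2 * snd v) =
  (x1 * fst v' + x2 * snd v') * (y1 * fst v' + y2 * snd v') ->
  dist Q F' = dist Q' F'.
Proof.
  intros Hs Q Q' HPQ x1 x2 y1 y2 Hxy.
  destruct (foc_diff k m F P v v' Hs) as [D1 D2]. fold Q Q' x1 x2 in D1, D2.
  rewrite !dist_eq. f_equal.
  replace ((fst Q - fst F') * (fst Q - fst F') + (snd Q - snd F') * (snd Q - snd F'))
    with ((fst Q' - fst F') * (fst Q' - fst F') + (snd Q' - snd F') * (snd Q' - snd F')
      + (((fst P - fst Q) ^ 2 + (snd P - snd Q) ^ 2) - ((fst P - fst Q') ^ 2 + (snd P - snd Q') ^ 2))
      - 2 * ((fst Q - fst Q') * y1 + (snd Q - snd Q') * y2)) by (unfold y1, y2; ring).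
  rewrite HPQ, D1, D2.
  replace (m / k * ((x1 * fst v' + x2 * snd v') * fst v' - (x1 * fst v + x2 * snd v) * fst v) * y1 +
     m / k * ((x1 * fst v' + x2 * snd v') * snd v' - (x1 * fst v + x2 * snd v) * snd v) * y2)
    with (m / k * ((x1 * fst v' + x2 * snd v') * (y1 * fst v' + y2 * snd v') - (x1 * fst v + x2 * snd v) * (y1 * fst v + y2 * snd v))) by ring.
  rewrite Hxy. ring.
Qed.

Lemma final_dot k m F P n v v' :
  fst v * fst v + snd v * snd v = fst v' * fst v' + snd v' * snd v' ->
  let x1 := fst P - fst F in let x2 := snd P - snd F in
  (x1 * fst v + x2 * snd v) * (fst n * fst v + snd n * snd v) =
  (x1 * fst v' + x2 * snd v') * (fst n * fst v' + snd n * snd v') ->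
  dot (foc k m F P v') n = dot (foc k m F P v) n.
Proof.
  intros Hs x1 x2 Hxy.
  destruct (foc_diff k m F P v v' Hs) as [D1 D2]. fold x1 x2 in D1, D2.
  unfold dot.
  replace (fst (foc k m F P v) * fst n + snd (foc k m F P v) * snd n) with
    (fst (foc k m F P v') * fst n + snd (foc k m F P v') * snd n
     + ((fst (foc k m F P v) - fst (foc k m F P v')) * fst n + (snd (foc k m F P v) - snd (foc k m F P v')) * snd n)) by ring.
  rewrite D1, D2.
  replace (m / k * ((x1 * fst v' + x2 * snd v') * fst v' - (x1 * fst v + x2 * snd v) * fst v) * fst n +
     m / k * ((x1 * fst v' + x2 * snd v') * snd v' - (x1 * fst v + x2 * snd v) * snd v) * snd n)
   with (m / k * ((x1 * fst v' + x2 * snd v') * (fst n * fst v' + snd n * snd v') - (x1 * fst v + x2 * snd v) * (fst n * fst v + snd n * snd v))) by ring.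
  rewrite Hxy. ring.
Qed.

Lemma reflect_norm w v : w <> (0,0) -> dot (reflect w v) (reflect w v) = dot v v.
Proof.
  intro Hw. assert (H := nn_pos w Hw). unfold reflect, dot; simpl. field. lra.
Qed.

Lemma energy_repuls k F g t0 t1 : kepler_arc k F g t0 t1 -> t0 <= t1 -> k < 0 -> 0 < energy k F g t0.
Proof.
  intros Hk H01 Hn. destruct (kepler_derivs _ _ _ _ _ Hk) as [a [b [Ha [Hb H]]]].
  destruct (H t0) as [Hr _]. split; lra.
  rewrite energy_eq.
  assert (0 < - k / dist (g t0) F) by (apply Rdiv_lt_0_compat; lra).
  assert (0 <= Vx g t0 * Vx g t0 + Vy g t0 * Vy g t0) by nra.
  unfold Rdiv in *. lra.
Qed.

Lemma sf_sq k F E g t0 t1 Q : k <> 0 -> E <> 0 -> (k < 0 -> 0 < E) ->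
  second_focus k F E g t0 t1 Q -> forall t, t0 <= t <= t1 ->
  (fst (g t) - fst Q) ^ 2 + (snd (g t) - snd Q) ^ 2 = (dist (g t) F + k / E) ^ 2.
Proof.
  intros Hk HE Hs H t Ht. destruct (H t Ht) as [H1 [H2 H3]].
  replace ((fst (g t) - fst Q) ^ 2 + (snd (g t) - snd Q) ^ 2) with (dist (g t) Q * dist (g t) Q)
    by (rewrite dist_sq; ring).
  unfold semi_major in *.
  destruct (Rlt_or_le E 0) as [HEn|HEp].
  - assert (Hkp : 0 < k) by (destruct (Rlt_or_le k 0) as [Hk0|Hk0]; [specialize (Hs Hk0); lra | lra]).
    specialize (H1 HEn). rewrite Rabs_right in H1 by lra. rewrite Rabs_left in H1 by lra.
    assert (E3 : 2 * (k / (2 * - E)) = - (k / E)) by (field; lra).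
    replace (dist (g t) Q) with (- (dist (g t) F + k / E)) by lra.
    ring.
  - assert (HEp' : 0 < E) by lra.
    destruct (Rlt_or_le k 0) as [Hkn|Hkp].
    + specialize (H3 HEp' Hkn). rewrite Rabs_left in H3 by lra. rewrite Rabs_right in H3 by lra.
      replace (dist (g t) Q) with (dist (g t) F + k / E). ring.
      assert (E3 : 2 * (- k / (2 * E)) = - (k / E)) by (field; lra). lra.
    + assert (Hkp' : 0 < k) by lra.
      specialize (H2 HEp' Hkp'). rewrite Rabs_right in H2 by lra. rewrite Rabs_right in H2 by lra.
      replace (dist (g t) Q) with (dist (g t) F + k / E). ring.
      assert (E3 : 2 * (k / (2 * E)) = k / E) by (field; lra). lra.
Qed.

Lemma energies k F K N t g : billiard_traj k F K N t g ->
  forall i, (i <= N)%nat -> energy k F (g i) (t i) = energy k F (g 0%nat) (t 0%nat).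
Proof.
  intros [Harc Himp] i. induction i as [|i IH]; intros Hi; auto.
  assert (Hi' : (i < N)%nat) by lia.
  destruct (Himp i Hi') as [Hpos [_ [w [[Hw _] Hv]]]].
  destruct (Harc i ltac:(lia)) as [Hlt [Hka _]].
  rewrite <- IH by lia.
  rewrite <- (energy_const k F (g i) (t i) (t (S i)) Hka (t (S i))) by lra.
  unfold energy. rewrite Hv, reflect_norm, Hpos; auto.
Qed.

Lemma common k F K N t g Fs : k <> 0 -> billiard_traj k F K N t g ->
  energy k F (g 0%nat) (t 0%nat) <> 0 ->
  (forall i, (i <= N)%nat ->
     second_focus k F (energy k F (g i) (t i)) (g i) (t i) (t (S i)) (Fs i)) ->
  forall i, (i < N)%nat ->
  exists w, tangent_vec K (g i (t (S i))) w /\ K (g i (t (S i))) /\ g i (t (S i)) <> F /\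
    Fs i = foc k (k / energy k F (g 0%nat) (t 0%nat)) F (g i (t (S i))) (vel (g i) (t (S i))) /\
    Fs (S i) = foc k (k / energy k F (g 0%nat) (t 0%nat)) F (g i (t (S i))) (reflect w (vel (g i) (t (S i)))) /\
    (fst (g i (t (S i))) - fst (Fs i)) ^ 2 + (snd (g i (t (S i))) - snd (Fs i)) ^ 2
      = (fst (g i (t (S i))) - fst (Fs (S i))) ^ 2 + (snd (g i (t (S i))) - snd (Fs (S i))) ^ 2.
Proof.
  intros Hk Hb HE0 Hsf i Hi.
  assert (Hen := energies _ _ _ _ _ _ Hb).
  set (E0 := energy k F (g 0%nat) (t 0%nat)) in *.
  destruct Hb as [Harc Himp].
  destruct (Himp i Hi) as [Hpos [HK [w [Htan Hv]]]].
  destruct (Harc i ltac:(lia)) as [Hlt [Hka _]].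
  destruct (Harc (S i) ltac:(lia)) as [Hlt' [Hka' _]].
  assert (Hsg : k < 0 -> 0 < E0).
  { intro Hn. unfold E0. destruct (Harc 0%nat ltac:(lia)) as [Hl0 [Hk0 _]].
    apply (energy_repuls k F (g 0%nat) (t 0%nat) (t 1%nat)); auto; lra. }
  assert (Q1 := sf_sq k F E0 (g i) (t i) (t (S i)) (Fs i) Hk HE0 Hsg).
  rewrite <- (Hen i) in Q1 at 1 by lia. specialize (Q1 (Hsf i ltac:(lia))).
  assert (Q2 := sf_sq k F E0 (g (S i)) (t (S i)) (t (S (S i))) (Fs (S i)) Hk HE0 Hsg).
  rewrite <- (Hen (S i)) in Q2 at 1 by lia. specialize (Q2 (Hsf (S i) ltac:(lia))).
  assert (HneF : g i (t (S i)) <> F).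
  { destruct Hka as [a [b [Ha [Hb' H]]]]. apply (H (t (S i))). lra. }
  exists w. split; auto. split; auto. split; auto.
  split. apply (focus_lemma k (k / E0) F (g i) (t i) (t (S i)) (t (S i))); auto.
  split. rewrite <- Hv, Hpos. apply (focus_lemma k (k / E0) F (g (S i)) (t (S i)) (t (S (S i))) (t (S i))); auto.
  rewrite (Q1 (t (S i))) by lra. rewrite Hpos. rewrite (Q2 (t (S i))) by lra. reflexivity.
Qed.

Lemma dist_sym P Q : dist P Q = dist Q P.
Proof. rewrite !dist_eq. f_equal. ring. Qed.

Lemma dist_self P : dist P P = 0.
Proof. rewrite dist_eq. replace (_ + _) with 0 by ring. apply sqrt_0. Qed.

Lemma geo_pair P F F' w v sg : w <> (0,0) -> sg * sg = 1 -> P <> F -> P <> F' ->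
  (fst w * (fst P - fst F) + snd w * (snd P - snd F)) / dist P F
  + sg * ((fst w * (fst P - fst F') + snd w * (snd P - snd F')) / dist P F') = 0 ->
  ~ (dist P F' * (fst P - fst F) = sg * dist P F * (fst F' - fst P) /\
     dist P F' * (snd P - snd F) = sg * dist P F * (snd F' - snd P)) ->
  let x1 := fst P - fst F in let x2 := snd P - snd F in
  let y1 := fst F' - fst P in let y2 := snd F' - snd P in
  let v' := reflect w v in
  (x1 * fst v + x2 * snd v) * (y1 * fst v + y2 * snd v) =
  (x1 * fst v' + x2 * snd v') * (y1 * fst v' + y2 * snd v').
Proof.
  intros Hw Hsg HF HF' Ht Hnd x1 x2 y1 y2 v'.
  assert (Hr := dist_pos' _ _ HF). assert (Hr' := dist_pos' _ _ HF').
  assert (Hrr := dist_sq P F). assert (Hrr' := dist_sq P F').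
  set (r := dist P F) in *. set (r' := dist P F') in *.
  assert (HW := nn_pos w Hw).
  assert (K := refl_key (r' * x1) (r' * x2) (sg * r * y1) (sg * r * y2) (fst w) (fst w * 0 + snd w) (fst v) (snd v)).
  replace (fst w * 0 + snd w) with (snd w) in K by ring.
  assert (K' : (r' * x1 * fst v + r' * x2 * snd v) * (sg * r * y1 * fst v + sg * r * y2 * snd v) =
       (r' * x1 * fst v' + r' * x2 * snd v') * (sg * r * y1 * fst v' + sg * r * y2 * snd v')).
  { apply K.
    - lra.
    - replace (r' * x1 * (r' * x1) + r' * x2 * (r' * x2)) with (r' * r' * (x1 * x1 + x2 * x2)) by ring.
      replace (sg * r * y1 * (sg * r * y1) + sg * r * y2 * (sg * r * y2)) with ((sg * sg) * (r * r) * (y1 * y1 + y2 * y2)) by ring.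
      rewrite Hsg. unfold x1, x2, y1, y2. rewrite Hrr, Hrr'. ring.
    - apply (Rmult_eq_reg_l (/ (r * r'))). 2: { apply Rinv_neq_0_compat. nra. }
      rewrite Rmult_0_r. rewrite <- Ht. unfold x1, x2, y1, y2. field. lra.
    - intros [E1 E2]. apply Hnd. unfold x1, x2, y1, y2 in *. split; lra. }
  apply (Rmult_eq_reg_l (sg * r * r')). 2: { intro Hz. assert (sg <> 0) by (intro; subst; lra). 
     apply Rmult_integral in Hz. destruct Hz as [Hz|Hz]; [apply Rmult_integral in Hz; destruct Hz|]; lra. }
  unfold v' in *. 
  replace (sg * r * r' * ((x1 * fst v + x2 * snd v) * (y1 * fst v + y2 * snd v))) with
    ((r' * x1 * fst v + r' * x2 * snd v) * (sg * r * y1 * fst v + sg * r * y2 * snd v)) by ring.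
  rewrite K'. unfold reflect, dot; simpl. ring.
Qed.

Lemma nondeg_dist P F F' sg : sg * sg = 1 -> P <> F ->
  dist P F' * (fst P - fst F) = sg * dist P F * (fst F' - fst P) ->
  dist P F' * (snd P - snd F) = sg * dist P F * (snd F' - snd P) ->
  dist F F' * dist F F' = (dist P F + sg * dist P F') ^ 2.
Proof.
  intros Hsg HF E1 E2.
  assert (Hr := dist_pos' _ _ HF). assert (Hrr := dist_sq P F).
  set (r := dist P F) in *. set (r' := dist P F') in *.
  rewrite dist_sq.
  assert (A1 : r * (fst F' - fst F) = (r + sg * r') * (fst P - fst F)).
  { replace (r * (fst F' - fst F)) with (r * (fst P - fst F) + sg * (sg * r * (fst F' - fst P))).
    rewrite <- E1. ring. replace (sg * (sg * r * (fst F' - fst P))) with ((sg * sg) * r * (fst F' - fst P)) by ring.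
    rewrite Hsg. ring. }
  assert (A2 : r * (snd F' - snd F) = (r + sg * r') * (snd P - snd F)).
  { replace (r * (snd F' - snd F)) with (r * (snd P - snd F) + sg * (sg * r * (snd F' - snd P))).
    rewrite <- E2. ring. replace (sg * (sg * r * (snd F' - snd P))) with ((sg * sg) * r * (snd F' - snd P)) by ring.
    rewrite Hsg. ring. }
  apply (Rmult_eq_reg_l (r * r)). 2: nra.
  replace (r * r * ((fst F - fst F') * (fst F - fst F') + (snd F - snd F') * (snd F - snd F')))
    with ((r * (fst F' - fst F)) * (r * (fst F' - fst F)) + (r * (snd F' - snd F)) * (r * (snd F' - snd F))) by ring.
  rewrite A1, A2.
  replace ((r + sg * r') * (fst P - fst F) * ((r + sg * r') * (fst P - fst F)) +
    (r + sg * r') * (snd P - snd F) * ((r + sg * r') * (snd P - snd F))) with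
    ((r + sg * r') ^ 2 * ((fst P - fst F) * (fst P - fst F) + (snd P - snd F) * (snd P - snd F))) by ring.
  rewrite <- Hrr. ring.
Qed.

Lemma step_i k F F' K N t g Fs : k <> 0 ->
  (ellipse_wall F F' K \/ hyperbola_branch_wall F F' K) ->
  billiard_traj k F K N t g -> energy k F (g 0%nat) (t 0%nat) <> 0 ->
  (forall i, (i <= N)%nat ->
     second_focus k F (energy k F (g i) (t i)) (g i) (t i) (t (S i)) (Fs i)) ->
  forall i, (i < N)%nat -> dist (Fs (S i)) F' = dist (Fs i) F'.
Proof.
  intros Hk Hwall Hb HE Hsf i Hi.
  destruct (common k F K N t g Fs Hk Hb HE Hsf i Hi) as [w [Htan [HK [HneF [E1 [E2 HPQ]]]]]].
  set (P := g i (t (S i))) in *. set (v := vel (g i) (t (S i))) in *.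
  set (m := k / energy k F (g 0%nat) (t 0%nat)) in *.
  assert (Hw : w <> (0,0)) by (destruct Htan; auto).
  assert (Hs : fst v * fst v + snd v * snd v = fst (reflect w v) * fst (reflect w v) + snd (reflect w v) * snd (reflect w v)).
  { symmetry. apply (reflect_norm w v Hw). }
  assert (Hrr0 := dist_nonneg F F').
  assert (Hr := dist_pos' _ _ HneF).
  assert (Hr' := dist_nonneg P F').
  assert (Hxy : let x1 := fst P - fst F in let x2 := snd P - snd F in
     let y1 := fst F' - fst P in let y2 := snd F' - snd P in
     let v' := reflect w v in
     (x1 * fst v + x2 * snd v) * (y1 * fst v + y2 * snd v) =
     (x1 * fst v' + x2 * snd v') * (y1 * fst v' + y2 * snd v')).
  { destruct Hwall as [[b [Hlt Hiff]] | [b [Hb0 [Hlt Hiff]]]].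
    - assert (HKc : forall X, K X -> dist X F + 1 * dist X F' = 2 * b).
      { intros X HX. rewrite Rmult_1_l. apply Hiff; auto. }
      assert (HPb := HKc P HK).
      assert (HneF' : P <> F').
      { intro Heq. rewrite Heq, dist_self, dist_sym in HPb. lra. }
      apply (geo_pair P F F' w v 1); auto. lra.
      apply (tangency2 K F F' P w 1 (2 * b)); auto.
      intros [N1 N2]. assert (HD := nondeg_dist P F F' 1 ltac:(lra) HneF N1 N2).
      rewrite Rmult_1_l in HPb. rewrite Rmult_1_l, HPb in HD. nra.
    - assert (HKc : exists c, c * c = 4 * b * b /\ forall X, K X -> dist X F + -1 * dist X F' = c).
      { destruct Hiff as [Hiff|Hiff].
        + exists (2 * b). split. ring. intros X HX. apply Hiff in HX. lra.
        + exists (- (2 * b)). split. ring. intros X HX. apply Hiff in HX. lra. }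
      destruct HKc as [c [Hc HKc]].
      assert (HPb := HKc P HK).
      assert (HneF' : P <> F').
      { intro Heq. rewrite Heq, dist_self, dist_sym in HPb. nra. }
      apply (geo_pair P F F' w v (-1)); auto. lra.
      apply (tangency2 K F F' P w (-1) c); auto.
      intros [N1 N2]. assert (HD := nondeg_dist P F F' (-1) ltac:(lra) HneF N1 N2).
      rewrite HPb in HD. nra. }
  rewrite E1, E2 in *.
  symmetry. apply final_dist; auto.
Qed.

Lemma step_ii k F D n K N t g Fs : k <> 0 -> parabola_wall F D n K ->
  billiard_traj k F K N t g -> energy k F (g 0%nat) (t 0%nat) <> 0 ->
  (forall i, (i <= N)%nat ->
     second_focus k F (energy k F (g i) (t i)) (g i) (t i) (t (S i)) (Fs i)) ->
  forall i, (i < N)%nat -> dot (Fs (S i)) n = dot (Fs i) n.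
Proof.
  intros Hk [Hn [HFD Hiff]] Hb HE Hsf i Hi.
  destruct (common k F K N t g Fs Hk Hb HE Hsf i Hi) as [w [Htan [HK [HneF [E1 [E2 _]]]]]].
  set (P := g i (t (S i))) in *. set (v := vel (g i) (t (S i))) in *.
  set (m := k / energy k F (g 0%nat) (t 0%nat)) in *.
  assert (Hw : w <> (0,0)) by (destruct Htan; auto).
  assert (Hs : fst v * fst v + snd v * snd v = fst (reflect w v) * fst (reflect w v) + snd (reflect w v) * snd (reflect w v)).
  { symmetry. apply (reflect_norm w v Hw). }
  assert (Hr := dist_pos' _ _ HneF).
  assert (Hrr := dist_sq P F).
  assert (Hnn := nn_pos n Hn).
  assert (HT := tangencyP K F D n P w Htan Hiff Hn).
  assert (HS := parab_sq F D n P Hn (proj1 (Hiff P) HK)).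
  rewrite <- Hrr in HS.
  set (B := (fst P - fst D) * fst n + (snd P - snd D) * snd n) in *.
  set (c := fst n * fst n + snd n * snd n) in *.
  set (r := dist P F) in *.
  assert (HB : B <> 0).
  { intro HB0. rewrite HB0 in HS. assert (0 < r * r * c) by (apply Rmult_lt_0_compat; nra). simpl in HS. lra. }
  set (l := B / c).
  assert (HW := nn_pos w Hw).
  assert (KK := refl_key (fst P - fst F) (snd P - snd F) (l * fst n) (l * snd n) (fst w) (fst w * 0 + snd w) (fst v) (snd v)).
  replace (fst w * 0 + snd w) with (snd w) in KK by ring.
  assert (K' : ((fst P - fst F) * fst v + (snd P - snd F) * snd v) * (l * fst n * fst v + l * snd n * snd v) =
     ((fst P - fst F) * fst (reflect w v) + (snd P - snd F) * snd (reflect w v)) *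
     (l * fst n * fst (reflect w v) + l * snd n * snd (reflect w v))).
  { unfold reflect, dot. simpl. apply KK.
    - lra.
    - rewrite <- Hrr. unfold l. apply (Rmult_eq_reg_l c). 2: lra.
      field_simplify_eq. 2: lra. replace ((fst n * fst n + snd n * snd n)) with c by reflexivity.
      replace (B ^ 2 * fst n ^ 2 + B ^ 2 * snd n ^ 2) with (B ^ 2 * c) by (unfold c; ring).
      rewrite <- HS. ring.
    - unfold l. apply (Rmult_eq_reg_l c). 2: lra. rewrite Rmult_0_r.
      replace (c * (fst w * (fst P - fst F - B / c * fst n) + snd w * (snd P - snd F - B / c * snd n)))
        with ((fst w * (fst P - fst F) + snd w * (snd P - snd F)) * c - B * (fst w * fst n + snd w * snd n))
        by (field; lra).
      rewrite HT. ring.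
    - intros [A1 A2]. apply HFD. unfold dot, vsub; simpl.
      replace ((fst F - fst D) * fst n + (snd F - snd D) * snd n) with
        (B - ((fst P - fst F) * fst n + (snd P - snd F) * snd n)) by (unfold B; ring).
      rewrite A1, A2. unfold l. field_simplify_eq. 2: lra.
      unfold c. ring. }
  assert (Hl : l <> 0) by (unfold l; unfold Rdiv; apply Rmult_integral_contrapositive; split; [lra | apply Rinv_neq_0_compat; lra]).
  rewrite E1, E2.
  apply final_dot; auto.
  apply (Rmult_eq_reg_l l); auto.
  replace (l * (((fst P - fst F) * fst v + (snd P - snd F) * snd v) * (fst n * fst v + snd n * snd v)))
    with (((fst P - fst F) * fst v + (snd P - snd F) * snd v) * (l * fst n * fst v + l * snd n * snd v)) by ring.
  rewrite K'. ring.
Qed.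

Theorem mainTheorem1 :
  (forall (k : R) (F F' : pt) (K : pt -> Prop) (N : nat)
          (t : nat -> R) (g : nat -> R -> pt) (Fs : nat -> pt),
     k <> 0 ->
     (ellipse_wall F F' K \/ hyperbola_branch_wall F F' K) ->
     billiard_traj k F K N t g ->
     energy k F (g 0%nat) (t 0%nat) <> 0 ->
     (forall i, (i <= N)%nat ->
        second_focus k F (energy k F (g i) (t i)) (g i) (t i) (t (S i)) (Fs i)) ->
     exists r, forall i, (i <= N)%nat -> dist (Fs i) F' = r)
  /\
  (forall (k : R) (F D n : pt) (K : pt -> Prop) (N : nat)
          (t : nat -> R) (g : nat -> R -> pt) (Fs : nat -> pt),
     k <> 0 ->
     parabola_wall F D n K ->
     billiard_traj k F K N t g ->
     energy k F (g 0%nat) (t 0%nat) <> 0 ->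
     (forall i, (i <= N)%nat ->
        second_focus k F (energy k F (g i) (t i)) (g i) (t i) (t (S i)) (Fs i)) ->
     exists c, forall i, (i <= N)%nat -> dot (Fs i) n = c).
Proof.
  split.
  - intros k F F' K N t g Fs Hk Hw Hb HE Hsf. exists (dist (Fs 0%nat) F').
    intros i Hi. induction i as [|i IH]; auto.
    rewrite (step_i k F F' K N t g Fs Hk Hw Hb HE Hsf i) by lia. apply IH; lia.
  - intros k F D n K N t g Fs Hk Hw Hb HE Hsf. exists (dot (Fs 0%nat) n).
    intros i Hi. induction i as [|i IH]; auto.
    rewrite (step_ii k F D n K N t g Fs Hk Hw Hb HE Hsf i) by lia. apply IH; lia.
Qed.

Print Assumptions mainTheorem1.
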